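(* Let $f \colon \mathbb{R}^n \to \mathbb{R}$ be the Euclidean norm, $f(x) = \|x\|$. Then every BFGS sequence $(x_k)_{k \ge 0}$ for $f$ converges to $0$.
   Context: A sequence $(x_k)$ is a BFGS sequence for $f$ if $f$ is differentiable at each $x_k$ with $\nabla f(x_k) \neq 0$, and there exist parameters $0<\mu<\nu<1$ and a positive definite $n\times n$ matrix $H_0$ such that, with $s_k = x_{k+1}-x_k$, $y_k = \nabla f(x_{k+1}) - \nabla f(x_k)$, $V_k = I - \frac{s_k y_k^T}{s_k^T y_k}$ and $H_{k+1} = V_k H_k V_k^T + \frac{s_k s_k^T}{s_k^T y_k}$, one has for all $k=0,1,2,\dots$: $H_k \nabla f(x_k) \in -\mathbb{R}_+ s_k$, $f(x_{k+1}) \le f(x_k) + \mu \nabla f(x_k)^T s_k$, and $\nabla f(x_{k+1})^T s_k \ge \nu \nabla f(x_k)^T s_k$. *)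

(* Defs.v *)
From HB Require Import structures.
From mathcomp Require Import all_boot all_order all_algebra.
From mathcomp Require Import all_classical all_reals all_analysis.
Set Implicit Arguments. Unset Strict Implicit. Unset Printing Implicit Defensive.
Import Order.TTheory GRing.Theory Num.Theory.
Import numFieldNormedType.Exports.
Local Open Scope ring_scope.

Section BFGS.
Variables (R : realType) (n : nat).

Definition dotv (u v : 'cV[R]_n) : R := (u^T *m v) 0 0.

Definition euclid_norm (x : 'cV[R]_n) : R := Num.sqrt (\sum_i (x i 0) ^+ 2).

Definition is_gradient (f : 'cV[R]_n -> R) (x g : 'cV[R]_n) : Prop :=
  differentiable f x /\ forall v : 'cV[R]_n, 'd f x v = dotv g v.

Definition posdef (H : 'M[R]_n) : Prop :=
  H^T = H /\ forall v : 'cV[R]_n, v != 0 -> 0 < dotv v (H *m v).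

Definition BFGS_update (H : 'M[R]_n) (s y : 'cV[R]_n) : 'M[R]_n :=
  let V := 1%:M - (dotv s y)^-1 *: (s *m y^T) in
  V *m H *m V^T + (dotv s y)^-1 *: (s *m s^T).

Fixpoint BFGS_H (H0 : 'M[R]_n) (s y : nat -> 'cV[R]_n) (k : nat) : 'M[R]_n :=
  match k with
  | 0 => H0
  | k'.+1 => BFGS_update (BFGS_H H0 s y k') (s k') (y k')
  end.

Definition BFGS_sequence (f : 'cV[R]_n -> R) (x : nat -> 'cV[R]_n) : Prop :=
  exists (g : nat -> 'cV[R]_n) (mu nu : R) (H0 : 'M[R]_n),
    (forall k, is_gradient f (x k) (g k) /\ g k != 0) /\
    0 < mu /\ mu < nu /\ nu < 1 /\ posdef H0 /\
    let s := fun k => x k.+1 - x k in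
    let y := fun k => g k.+1 - g k in
    forall k,
      (exists t : R, 0 <= t /\ BFGS_H H0 s y k *m g k = - (t *: s k)) /\
      f (x k.+1) <= f (x k) + mu * dotv (g k) (s k) /\
      dotv (g k.+1) (s k) >= nu * dotv (g k) (s k).

End BFGS.

(* Main.v *)
Require Import Defs.
From HB Require Import structures.
From mathcomp Require Import all_boot all_order all_algebra.
From mathcomp Require Import all_classical all_reals all_analysis.
From mathcomp Require Import ring lra.
From mathcomp Require Import perm.
Import Order.TTheory GRing.Theory Num.Theory.
Import numFieldNormedType.Exports.
Local Open Scope classical_set_scope.
Local Open Scope ring_scope.
Set Implicit Arguments. Unset Strict Implicit. Unset Printing Implicit Defensive.

Section Dot.
Variables (R : realType) (n : nat).
Implicit Types u v w : 'cV[R]_n.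
Local Notation dot := (@dotv R n).

Lemma dotvE u v : dot u v = \sum_i u i 0 * v i 0.
Proof. by rewrite /dotv !mxE; apply: eq_bigr => i _; rewrite mxE. Qed.

Lemma dotvC u v : dot u v = dot v u.
Proof. by rewrite !dotvE; apply: eq_bigr => i _; rewrite mulrC. Qed.

Lemma dotvDl u v w : dot (u + v) w = dot u w + dot v w.
Proof. by rewrite !dotvE -big_split; apply: eq_bigr => i _; rewrite mxE mulrDl. Qed.

Lemma dotvDr u v w : dot w (u + v) = dot w u + dot w v.
Proof. by rewrite dotvC dotvDl !(dotvC w). Qed.

Lemma dotvZl a u v : dot (a *: u) v = a * dot u v.
Proof. by rewrite !dotvE mulr_sumr; apply: eq_bigr => i _; rewrite mxE mulrA. Qed.

Lemma dotvZr a u v : dot v (a *: u) = a * dot v u.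
Proof. by rewrite dotvC dotvZl dotvC. Qed.

Lemma dotvNl u v : dot (- u) v = - dot u v.
Proof. by rewrite -scaleN1r dotvZl mulN1r. Qed.

Lemma dotvNr u v : dot v (- u) = - dot v u.
Proof. by rewrite dotvC dotvNl dotvC. Qed.

Lemma dotvBl u v w : dot (u - v) w = dot u w - dot v w.
Proof. by rewrite dotvDl dotvNl. Qed.

Lemma dotvBr u v w : dot w (u - v) = dot w u - dot w v.
Proof. by rewrite dotvDr dotvNr. Qed.

Lemma dotv0l u : dot 0 u = 0.
Proof. by rewrite -(scale0r 0) dotvZl mul0r. Qed.

Lemma dotv0r u : dot u 0 = 0.
Proof. by rewrite dotvC dotv0l. Qed.

Lemma dotv_ge0 u : 0 <= dot u u.
Proof. by rewrite dotvE; apply: sumr_ge0 => i _; rewrite -expr2 sqr_ge0. Qed.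

Lemma dotv_eq0 u : dot u u = 0 -> u = 0.
Proof.
rewrite dotvE => /psumr_eq0P H; apply/matrixP => i j; rewrite (ord1 j) mxE.
have /eqP := H (fun i _ => ltac:(by rewrite -expr2 sqr_ge0)) i isT.
by rewrite mulf_eq0 orbb => /eqP.
Qed.

Lemma normE u : euclid_norm u = Num.sqrt (dot u u).
Proof. by rewrite /euclid_norm dotvE; congr Num.sqrt; apply: eq_bigr => i _; rewrite expr2. Qed.

Lemma norm_ge0 u : 0 <= euclid_norm u.
Proof. by rewrite normE sqrtr_ge0. Qed.

Lemma norm_sqr u : euclid_norm u ^+ 2 = dot u u.
Proof. by rewrite normE sqr_sqrtr // dotv_ge0. Qed.

Lemma normZ a u : euclid_norm (a *: u) = `|a| * euclid_norm u.
Proof.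
by rewrite !normE dotvZl dotvZr mulrA -expr2 sqrtrM ?sqr_ge0 // sqrtr_sqr.
Qed.

Lemma grad_cvg f x g v : is_gradient f x g ->
  (fun h : R => h^-1 *: (f (h *: v + x) - f x)) @ 0^' --> dot g v.
Proof.
case=> dfx dfE; have := @diff_derivable _ _ _ f x v dfx; rewrite /derivable.
by rewrite -dfE -deriveE.
Qed.


Lemma norm0 : euclid_norm (0 : 'cV[R]_n) = 0.
Proof. by rewrite normE dotv0l sqrtr0. Qed.

Lemma grad_norm x g : is_gradient (@euclid_norm R n) x g -> g != 0 ->
  0 < euclid_norm x /\ g = (euclid_norm x)^-1 *: x.
Proof.
move=> gr gn0.
have xn0 : x != 0.
  apply: contra gn0 => /eqP x0; subst x.
  set c := euclid_norm g.
  have H := @grad_cvg _ _ g g gr.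
  have qE h : h^-1 *: (euclid_norm (h *: g + 0) - euclid_norm (0 : 'cV[R]_n))
     = h^-1 * `|h| * c.
    by rewrite addr0 normZ norm0 subr0; exact: mulrA.
  have H' : (fun h : R => h^-1 * `|h| * c) @ 0^' --> dot g g.
    suff -> : (fun h : R => h^-1 * `|h| * c) = (fun h => h^-1 *: (euclid_norm (h *: g + 0) - euclid_norm (0:'cV[R]_n))) by [].
    by apply/funext => h; rewrite qE.
  have Hr : (fun h : R => h^-1 * `|h| * c) @ 0^'+ --> dot g g.
    exact: cvg_dnbhs_at_right.
  have Hl : (fun h : R => h^-1 * `|h| * c) @ 0^'- --> dot g g.
    exact: cvg_dnbhs_at_left.
  have Hr' : (fun h : R => h^-1 * `|h| * c) @ 0^'+ --> c.
    apply: cvg_near_cst; near=> h.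
    have hp : 0 < h by near: h; exact: nbhs_right_gt.
    by rewrite gtr0_norm // mulVf ?mul1r // gt_eqF.
  have Hl' : (fun h : R => h^-1 * `|h| * c) @ 0^'- --> - c.
    apply: cvg_near_cst; near=> h.
    have hp : h < 0 by near: h; exact: nbhs_left_lt.
    by rewrite ltr0_norm // mulrN mulVf ?mulN1r // lt_eqF.
  have e1 : dot g g = c by exact: (cvg_unique (@Rhausdorff R) Hr Hr').
  have e2 : dot g g = - c by exact: (cvg_unique (@Rhausdorff R) Hl Hl').
  have c0 : c = 0.
    have : c = - c by rewrite -{1}e1 e2.
    move=> cc; have : c + c = 0 by rewrite {1}cc addNr.
    by rewrite -mulr2n => /eqP; rewrite mulrn_eq0 /= => /eqP.
  by apply/eqP; apply: dotv_eq0; rewrite e1.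
have dxx : 0 < dot x x.
  by rewrite lt_def dotv_ge0 andbT; apply: contra xn0 => /eqP/dotv_eq0 ->.
set r := euclid_norm x.
have rp : 0 < r by rewrite /r normE sqrtr_gt0.
have key v : dot g v * (r + r) = 2 * dot x v.
  set F := fun h : R => euclid_norm (h *: v + x).
  set q := fun h : R => h^-1 *: (F h - r).
  have Hq : q @ 0^' --> dot g v := @grad_cvg _ _ g v gr.
  have Hid : (fun h : R => h) @ 0^' --> (0 : R) by apply: cvg_within_filter; exact: cvg_id.
  have L1 : (fun h => q h * (F h + r)) @ 0^' --> dot g v * (r + r).
    apply: cvgM => //.
    have -> : r + r = 0 * dot g v + r + r by rewrite mul0r add0r.
    apply: cvgD; last exact: cvg_cst.
    have : (fun h => h * q h + r) @ 0^' --> 0 * dot g v + r.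
      by apply: cvgD; [apply: cvgM | exact: cvg_cst].
    apply: cvg_trans; apply: near_eq_cvg; near=> h.
    have hn0 : h != 0 by near: h; exact: nbhs_dnbhs_neq.
    by rewrite /q /= mulrA mulfV // mul1r subrK.
  have L2 : (fun h => q h * (F h + r)) @ 0^' --> 2 * dot x v.
    have : (fun h => h * dot v v + 2 * dot x v) @ 0^' --> 0 * dot v v + 2 * dot x v.
      by apply: cvgD; [apply: cvgM => //; exact: cvg_cst | exact: cvg_cst].
    rewrite mul0r add0r; apply: cvg_trans; apply: near_eq_cvg; near=> h.
    have hn0 : h != 0 by near: h; exact: nbhs_dnbhs_neq.
    rewrite /q /= -mulrA -subr_sqr /F /r !norm_sqr !dotvDl !dotvDr !dotvZl !dotvZr.
    by rewrite (dotvC x v); field.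
  exact: (cvg_unique (@Rhausdorff R) L1 L2).
split => //.
apply: subr0_eq; apply: dotv_eq0.
rewrite dotvBl !dotvBr !dotvZl !dotvZr.
have k1 v : dot g v = r^-1 * dot x v.
  apply: (mulIf (_ : r + r != 0)); first by rewrite gt_eqF // addr_gt0.
  by rewrite key; field; rewrite gt_eqF.
have dxxE : dot x x = r ^+ 2 by rewrite /r norm_sqr.
by rewrite !k1 (dotvC x g) k1 dxxE; field; rewrite gt_eqF.
Unshelve. all: by end_near.
Qed.

End Dot.


Section Mat.
Variables (R : realType).

Lemma sylvester n m (U : 'M[R]_(n, m)) (W : 'M[R]_(m, n)) :
  \det (1%:M + U *m W) = \det (1%:M + W *m U).
Proof.
pose A := block_mx (1%:M : 'M[R]_n) (- U) W (1%:M : 'M[R]_m).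
pose L := block_mx (1%:M : 'M[R]_n) 0 (- W) (1%:M : 'M[R]_m).
have dL : \det L = 1 by rewrite det_lblock !det1 mulr1.
have e1 : L *m A = block_mx 1%:M (- U) 0 (1%:M + W *m U).
  rewrite mulmx_block !mul1mx !mul0mx !addr0 !mulNmx !mulmxN !mulmx1 opprK addNr addrC.
  by [].
have e2 : A *m L = block_mx (1%:M + U *m W) (- U) 0 1%:M.
  rewrite mulmx_block !mulmx1 !mulmx0 ?addr0 ?add0r !mulmxN !mulNmx !mul1mx opprK subrr.
  by [].
have := congr1 determinant e1; have := congr1 determinant e2.
rewrite !det_mulmx !det_ublock !det1 dL !mul1r ?mulr1 => <- <-.
by [].
Qed.

Lemma det2 (A : 'M[R]_2) : \det A = A 0 0 * A 1 1 - A 0 1 * A 1 0.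
Proof.
rewrite (expand_det_row _ 0) !big_ord_recl big_ord0 addr0 /cofactor !det_mx11 !mxE /=.
rewrite !expr0 !mul1r.
rewrite /bump /= expr1 mulN1r mulrN.
by congr (_ * A _ _ - A _ _ * A _ _); apply/val_inj.
Qed.
End Mat.


Section Alg.
Variables (R : realType) (n : nat).
Implicit Types u v w s y g : 'cV[R]_n.
Local Notation dot := (@dotv R n).

Lemma outerE u w v : (u *m w^T) *m v = dot w v *: u.
Proof. by rewrite -mulmxA [w^T *m v]mx11_scalar mul_mx_scalar. Qed.

Lemma dot_mulmx u (A : 'M[R]_n) v : dot u (A *m v) = dot (A^T *m u) v.
Proof. by rewrite /dotv trmx_mul trmxK mulmxA. Qed.

Lemma tr_outer u : \tr (u *m u^T) = dot u u.
Proof. by rewrite mxtrace_mulC trace_mx11. Qed.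

Lemma upd_apply (H : 'M[R]_n) s y v :
  let rho := (dot s y)^-1 in
  let w := v - (rho * dot s v) *: y in
  BFGS_update H s y *m v = H *m w - (rho * dot y (H *m w)) *: s + (rho * dot s v) *: s.
Proof.
move=> rho w; rewrite /BFGS_update -/rho.
have VT : (1%:M - rho *: (s *m y^T))^T = 1%:M - rho *: (y *m s^T).
  by rewrite linearB /= linearZ /= trmx1 trmx_mul trmxK.
rewrite VT; set V := 1%:M - rho *: (s *m y^T); set VT' := 1%:M - _.
rewrite mulmxDl -scalemxAl outerE scalerA.
have e1 : VT' *m v = w by rewrite /VT' mulmxBl mul1mx -scalemxAl outerE scalerA.
rewrite -!mulmxA e1 /V.
by rewrite mulmxBl mul1mx -scalemxAl outerE scalerA.
Qed.

Lemma upd_tr (H : 'M[R]_n) s y : H^T = H -> (BFGS_update H s y)^T = BFGS_update H s y.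
Proof.
move=> HT; rewrite /BFGS_update; set V := 1%:M - _.
rewrite linearD /= linearZ /= trmx_mul trmxK.
by rewrite !trmx_mul trmxK HT mulmxA.
Qed.

Lemma upd_quad (H : 'M[R]_n) s y v :
  let rho := (dot s y)^-1 in
  let w := v - (rho * dot s v) *: y in
  dot v (BFGS_update H s y *m v) = dot w (H *m w) + rho * (dot s v) ^+ 2.
Proof.
move=> rho w; rewrite upd_apply -/rho -/w.
rewrite !dotvDr !dotvNr !dotvZr.
have hw : dot w (H *m w) = dot v (H *m w) - rho * dot s v * dot y (H *m w).
  by rewrite /w dotvBl dotvZl; ring.
by rewrite hw (dotvC v s); ring.
Qed.

Lemma posdef_ge0 (H : 'M[R]_n) v : posdef H -> 0 <= dot v (H *m v).
Proof.
case=> _ Hp; have [->|vn0] := eqVneq v 0; first by rewrite dotv0l.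
exact/ltW/Hp.
Qed.

Lemma upd_posdef (H : 'M[R]_n) s y :
  posdef H -> 0 < dot s y -> posdef (BFGS_update H s y).
Proof.
move=> Hpd sy; split; first by apply: upd_tr; case: Hpd.
move=> v vn0; rewrite upd_quad.
have [sv0|svn0] := eqVneq (dot s v) 0.
  rewrite sv0 mulr0 scale0r subr0 expr0n /= mulr0 addr0.
  by case: Hpd => _; apply.
apply: ltr_wpDl; first exact: posdef_ge0.
by rewrite mulr_gt0 ?invr_gt0 // lt_def sqr_ge0 andbT expf_neq0.
Qed.

Definition Bupd (B : 'M[R]_n) g y s (t : R) : 'M[R]_n :=
  B - (t * - dot g s)^-1 *: (g *m g^T) + (dot s y)^-1 *: (y *m y^T).

Lemma Bupd_tr (B : 'M[R]_n) g y s t : B^T = B -> (Bupd B g y s t)^T = Bupd B g y s t.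
Proof.
by move=> BT; rewrite /Bupd linearD linearB /= !linearZ /= !trmx_mul !trmxK BT.
Qed.

Lemma Bupd_trace (B : 'M[R]_n) g y s t :
  \tr (Bupd B g y s t) = \tr B - (t * - dot g s)^-1 * dot g g + (dot s y)^-1 * dot y y.
Proof. by rewrite /Bupd mxtraceD raddfB /= !mxtraceZ !tr_outer. Qed.

Lemma mx_eq1 (M : 'M[R]_n) : (forall u, M *m u = u) -> M = 1%:M.
Proof.
move=> Mu; apply/matrixP => i j.
have := congr1 (fun A : 'cV[R]_n => A i 0) (Mu (delta_mx j 0)).
by rewrite -colE !mxE /= eqxx andbT => ->.
Qed.

Lemma inv_upd (H B : 'M[R]_n) s y g t :
  H^T = H -> H *m B = 1%:M -> H *m g = - (t *: s) -> t != 0 ->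
  dot g s != 0 -> dot s y != 0 ->
  BFGS_update H s y *m Bupd B g y s t = 1%:M.
Proof.
move=> HT HB Hg tn0 gsn0 syn0.
have BH : B *m H = 1%:M := mulmx1C HB.
have BT : B^T = B.
  have e : B^T *m H = 1%:M by rewrite -HT -trmx_mul HB trmx1.
  by rewrite -[B^T]mulmx1 -HB mulmxA e mul1mx.
have Bs : B *m s = - (t^-1 *: g).
  have e : g = - (t *: (B *m s)) by rewrite scalemxAr -mulmxN -Hg mulmxA BH mul1mx.
  by rewrite e scalerN opprK scalerA mulVf // scale1r.
have sB u : dot s (B *m u) = - t^-1 * dot g u.
  by rewrite dot_mulmx BT Bs dotvNl dotvZl mulNr.
set rho := (dot s y)^-1; set c := (t * - dot g s)^-1.
apply: mx_eq1 => u.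
have Bu : Bupd B g y s t *m u = B *m u - (c * dot g u) *: g + (rho * dot y u) *: y.
  by rewrite /Bupd mulmxDl mulmxBl -!scalemxAl !outerE !scalerA.
rewrite -mulmxA Bu; set v := B *m u - _ + _.
have sv : dot s v = dot y u.
  rewrite /v dotvDr dotvBr !dotvZr sB (dotvC s g) /c /rho.
  by field; rewrite tn0 gsn0 syn0.
rewrite upd_apply -/rho sv.
have -> : v - (rho * dot y u) *: y = B *m u - (c * dot g u) *: g by rewrite /v addrK.
have -> : H *m (B *m u - (c * dot g u) *: g) = u + (c * dot g u * t) *: s.
  by rewrite mulmxBr mulmxA HB mul1mx -scalemxAr Hg scalerN opprK scalerA.
rewrite dotvDr dotvZr.
have -> : forall k a b, (u + k *: s) - a *: s + b *: s = u + (k - a + b) *: s.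
  by move=> k a b; rewrite !scalerDl scaleNr !addrA.
suff -> : c * dot g u * t - rho * (dot y u + c * dot g u * t * dot y s) + rho * dot y u = 0.
  by rewrite scale0r addr0.
rewrite /c /rho (dotvC y s); field; by rewrite tn0 gsn0 syn0.
Qed.

End Alg.


Section Det.
Variables (R : realType).

Lemma det_block11 (P Q S T : 'M[R]_1) :
  \det (block_mx P Q S T : 'M[R]_(1 + 1)) = P 0 0 * T 0 0 - Q 0 0 * S 0 0.
Proof.
rewrite det2.
have -> : (0 : 'I_2) = @lshift 1 1 0 by apply/val_inj.
have -> : (1 : 'I_2) = @rshift 1 1 0 by apply/val_inj.
move: (block_mxEul P Q S T 0 0) (block_mxEur P Q S T 0 0).
move: (block_mxEdl P Q S T 0 0) (block_mxEdr P Q S T 0 0).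
by move=> <- <- <- <-.
Qed.

Variable n : nat.
Local Notation dot := (@dotv R n).

Lemma Bupd_det (H B : 'M[R]_n) s y g t :
  H^T = H -> H *m B = 1%:M -> H *m g = - (t *: s) -> t != 0 ->
  dot g s != 0 -> dot s y != 0 ->
  \det (Bupd B g y s t) = \det B * (t * dot s y / (- dot g s)).
Proof.
move=> HT HB Hg tn0 gsn0 syn0.
have BH : B *m H = 1%:M := mulmx1C HB.
set rho := (dot s y)^-1; set c := (t * - dot g s)^-1.
set w := H *m y.
pose U := row_mx s w.
pose W := col_mx ((c * t) *: g^T) (rho *: y^T).
have BT : B^T = B.
  have e : B^T *m H = 1%:M by rewrite -HT -trmx_mul HB trmx1.
  by rewrite -[B^T]mulmx1 -HB mulmxA e mul1mx.
have Bs : B *m s = - (t^-1 *: g).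
  have e : g = - (t *: (B *m s)) by rewrite scalemxAr -mulmxN -Hg mulmxA BH mul1mx.
  by rewrite e scalerN opprK scalerA mulVf // scale1r.
have E : Bupd B g y s t = B *m (1%:M + U *m W).
  rewrite mulmxDr mulmx1 /U /W mul_row_col mulmxDr -!scalemxAr !mulmxA Bs /w.
  rewrite ?mulmxA BH mul1mx /Bupd -/c -/rho -addrA; congr (B + (_ + _)).
  rewrite mulNmx -scalemxAl scalerN scalerA; congr (- (_ *: _)).
  by rewrite /c; field; rewrite tn0 gsn0.
rewrite E det_mulmx sylvester; congr (_ * _).
rewrite /U /W mul_col_row (scalar_mx_block 1 1 1) add_block_mx det_block11.
have ent (a : R) (u v : 'cV[R]_n) : (a *: u^T *m v) 0 0 = a * dot u v.
  by rewrite -scalemxAl mxE.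
have ent1 (a : R) (u v : 'cV[R]_n) : ((1%:M : 'M[R]_1) + a *: u^T *m v) 0 0 = 1 + a * dot u v.
  by rewrite mxE ent mxE.
rewrite !add0r !ent1 !ent.
have gw : dot g w = - t * dot s y by rewrite /w dot_mulmx HT Hg dotvNl dotvZl mulNr.
rewrite gw (dotvC y s) /c /rho; field.
by rewrite tn0 gsn0 syn0.
Qed.


Lemma dot_delta (i : 'I_n) (v : 'cV[R]_n) : dot (delta_mx i 0) v = v i 0.
Proof. by rewrite /dotv trmx_delta -rowE mxE. Qed.

Lemma dot_delta2 (B : 'M[R]_n) i j : dot (delta_mx i 0) (B *m delta_mx j 0) = B i j.
Proof. by rewrite dot_delta -colE mxE. Qed.

Lemma diag_le_tr (B : 'M[R]_n) k : (forall i, 0 <= B i i) -> B k k <= \tr B.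
Proof.
move=> d; rewrite /mxtrace (bigD1 k) //= lerDl; exact: sumr_ge0.
Qed.

Lemma det_le_tr (B : 'M[R]_n) : B^T = B -> (forall v, 0 <= dot v (B *m v)) ->
  `|\det B| <= (n`!)%:R * (\tr B) ^+ n.
Proof.
move=> BT psd.
have d i : 0 <= B i i by rewrite -dot_delta2.
have sym i j : B j i = B i j.
  by rewrite -{1}BT mxE.
have ent i j : `|B i j| <= \tr B.
  have p1 := psd (delta_mx i 0 + delta_mx j 0).
  have p2 := psd (delta_mx i 0 - delta_mx j 0).
  move: p1 p2; rewrite !mulmxDr ?mulmxN !dotvDl ?dotvNl !dotvDr ?dotvNr !dot_delta2 sym.
  have := diag_le_tr i d; have := diag_le_tr j d; have := d i; have := d j.
  rewrite ler_norml; move=> *; apply/andP; split; lra.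
rewrite /determinant.
apply: le_trans (ler_norm_sum _ _ _) _.
rewrite mulr_natl -card_Sn -sumr_const.
apply: ler_sum => p _.
rewrite normrM normr_sign mul1r normr_prod.
rewrite -[X in _ <= _ ^+ X](card_ord n) -prodr_const.
apply: ler_prod => i _; rewrite normr_ge0; exact: ent.
Qed.

End Det.


Section Num.
Variable R : realType.

Lemma AGM (k : nat) (E : nat -> R) : (forall j, 0 <= E j) ->
  \prod_(j < k) E j <= ((\sum_(j < k) E j) / k%:R) ^+ k.
Proof.
move=> E0.
have [+ _] := (@leif_AGM R 'I_k predT (fun j => E j) (fun j _ => E0 j)).
by rewrite cardT size_enum_ord.
Qed.


Lemma powle (a b : R) k : 0 <= a -> a <= b -> a ^+ k <= b ^+ k.
Proof. by move=> a0 ab; apply: lerXn2r => //; rewrite nnegrE //; exact: le_trans ab. Qed.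

Lemma numeric_contra (n : nat) (d T0 e S nu : R) (t c dl : nat -> R) :
  0 < d -> 0 <= T0 -> 0 < e -> 0 < S -> nu < 1 ->
  (forall j, 0 < t j) -> (forall j, 0 < dl j) -> (forall j, c j = (t j * dl j)^-1) ->
  (forall k, \sum_(j < k) dl j <= S) ->
  (forall k, \sum_(j < k) c j <= T0 + k%:R / e) ->
  (forall k, d * (1 - nu) ^+ k * \prod_(j < k) t j <= (n`!)%:R * (T0 + k%:R / e) ^+ n) ->
  False.
Proof.
move=> d0 T00 e0 S0 nu1 t0 dl0 cE sumd sumc detb.
have c0 j : 0 < c j by rewrite cE invr_gt0 mulr_gt0.
set A := T0 + e^-1.
have A0 : 0 < A by rewrite /A ltr_wpDl // invr_gt0.
have nu0 : 0 < 1 - nu by rewrite subr_gt0.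
set q := A * S / (1 - nu).
have q0 : 0 < q by rewrite /q mulr_gt0 ?invr_gt0 // mulr_gt0.
have key k : (0 < k)%N -> d * (k%:R / q) ^+ k <= (n`!)%:R * A ^+ n * k%:R ^+ n.
  move=> kp.
  have kR : 0 < k%:R :> R by rewrite ltr0n.
  have TkA : T0 + k%:R / e <= k%:R * A.
    rewrite /A mulrDr; apply: lerD; last by [].
    by rewrite ler_peMl // ler1n.
  have pc : \prod_(j < k) c j <= A ^+ k.
    apply: le_trans (AGM _ (fun j => ltW (c0 j))) _.
    apply: powle; first by apply: divr_ge0; [apply: sumr_ge0 => j _; exact: ltW | exact: ler0n].
    rewrite ler_pdivrMr //; apply: le_trans (sumc k) _; by rewrite [A * _]mulrC.
  have pd : \prod_(j < k) dl j <= (S / k%:R) ^+ k.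
    apply: le_trans (AGM _ (fun j => ltW (dl0 j))) _.
    apply: powle; first by apply: divr_ge0; [apply: sumr_ge0 => j _; exact: ltW | exact: ler0n].
    by rewrite ler_pM2r ?invr_gt0.
  have p1 : \prod_(j < k) t j * (\prod_(j < k) c j * \prod_(j < k) dl j) = 1.
    rewrite -!big_split /=; apply: big1 => j _.
    by rewrite cE; field; rewrite !gt_eqF.
  have pt0 : 0 < \prod_(j < k) t j by apply: prodr_gt0 => j _.
  have h1 : 1 <= \prod_(j < k) t j * (A ^+ k * (S / k%:R) ^+ k).
    rewrite -{1}p1 ler_pM2l //; apply: ler_pM => //.
      by apply: prodr_ge0 => j _; exact: ltW.
    by apply: prodr_ge0 => j _; exact: ltW.
  have h2 := detb k.
  have h3 : (n`!)%:R * (T0 + k%:R / e) ^+ n <= (n`!)%:R * (k%:R * A) ^+ n.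
    rewrite ler_pM2l ?ltr0n ?fact_gt0 //; apply: powle => //.
    by rewrite addr_ge0 // divr_ge0 // ?ler0n // ltW.
  have ek : (k%:R / q) ^+ k = (1 - nu) ^+ k * ((A ^+ k * (S / k%:R) ^+ k))^-1.
    rewrite /q -!exprMn -exprVn -exprMn; congr (_ ^+ _).
    by field; rewrite !gt_eqF.
  rewrite ek mulrA.
  apply: le_trans (_ : d * (1 - nu) ^+ k * \prod_(j < k) t j <= _); last first.
    apply: le_trans h2 _; apply: le_trans h3 _.
    by rewrite exprMn [k%:R ^+ n * _]mulrC mulrA.
  rewrite ler_pM2l; last by rewrite mulr_gt0 // exprn_gt0.
  rewrite -[X in X <= _]mul1r ler_pdivrMr; first exact: h1.
  by rewrite mulr_gt0 // exprn_gt0 // divr_gt0.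
set N := (n`!)%:R * A ^+ n.
have N0 : 0 <= N by rewrite /N mulr_ge0 // exprn_ge0 // ltW.
set C := N * q ^+ n / d.
have C0 : 0 <= C by rewrite /C divr_ge0 ?mulr_ge0 // ?exprn_ge0 // ltW.
have hm1 := archi_boundP C0; set m1 := Num.Def.archi_bound C in hm1.
have q2 : 0 <= 2 * q by rewrite mulr_ge0 // ltW.
have hm2 := archi_boundP q2; set m2 := Num.Def.archi_bound (2 * q) in hm2.
set M := maxn m1 m2; set k := (n + M)%N.
have m1M : m1%:R <= M%:R :> R by rewrite ler_nat leq_maxl.
have m2k : m2%:R <= k%:R :> R by rewrite ler_nat (leq_trans (leq_maxr m1 m2)) // leq_addl.
have kp : (0 < k)%N.
  have : 0 < k%:R :> R by apply: le_lt_trans q2 _; apply: lt_le_trans hm2 m2k.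
  by rewrite ltr0n.
have := key k kp.
set z := k%:R / q.
have kz : k%:R = q * z by rewrite /z; field; rewrite gt_eqF.
have z2 : 2 <= z by rewrite /z ler_pdivlMr // ltW // (lt_le_trans hm2 m2k).
have z0 : 0 < z by apply: lt_le_trans z2.
move=> hk; rewrite kz /k exprD [(q * z) ^+ n]exprMn in hk.
have h1 : d * z ^+ M <= N * q ^+ n.
  rewrite -(ler_pM2l (exprn_gt0 n z0)); move: hk.
  by rewrite mulrCA -/N [N * _]mulrA [_ * z ^+ n]mulrC.
have h2 : d * 2 ^+ M <= d * z ^+ M by rewrite ler_pM2l // powle.
have h3 : 2 ^+ M <= C.
  rewrite /C ler_pdivlMr // mulrC; exact: le_trans h2 h1.
have h4 : M%:R < 2 ^+ M :> R by rewrite -natrX ltr_nat ltn_expl.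
have := lt_le_trans (lt_le_trans h4 h3) (ltW (lt_le_trans hm1 m1M)).
by rewrite ltxx.
Qed.

End Num.


Section Helpers.
Variables (R : realType) (n : nat).
Local Notation dot := (@dotv R n).
Implicit Types u v w s y g x : 'cV[R]_n.

Lemma tpos (H : 'M[R]_n) g s t : posdef H -> H *m g = - (t *: s) -> g != 0 -> 0 <= t ->
  0 < t /\ 0 < - dot g s.
Proof.
move=> [HT Hp] Hg gn0 t0.
have q := Hp g gn0; rewrite Hg dotvNr dotvZr in q.
have tp : 0 < t.
  rewrite lt_def t0 andbT; apply: contraTneq q => ->.
  by rewrite mul0r oppr0 ltxx.
split => //; rewrite -mulrN in q.
by rewrite -(pmulr_rgt0 _ tp).
Qed.

Lemma unit_gg x g : 0 < euclid_norm x -> g = (euclid_norm x)^-1 *: x -> dot g g = 1.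
Proof.
move=> rp ->; rewrite dotvZl dotvZr -norm_sqr; field.
by rewrite gt_eqF.
Qed.

Lemma yid x x' g g' : 0 < euclid_norm x -> g = (euclid_norm x)^-1 *: x ->
  0 < euclid_norm x' -> g' = (euclid_norm x')^-1 *: x' ->
  dot (g' - g) (g' - g) * (euclid_norm x + euclid_norm x') = 2 * dot (x' - x) (g' - g).
Proof.
move=> rp gE rp' gE'.
have gg := unit_gg rp gE; have gg' := unit_gg rp' gE'.
have xE : x = euclid_norm x *: g by rewrite gE scalerA mulfV ?gt_eqF // scale1r.
have xE' : x' = euclid_norm x' *: g' by rewrite gE' scalerA mulfV ?gt_eqF // scale1r.
rewrite {2}xE {2}xE'.
rewrite !dotvBl !dotvBr !dotvZl gg gg' (dotvC g g').
ring.
Qed.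

Lemma entry_le v i : `|v i 0| <= euclid_norm v.
Proof.
rewrite normE -sqrtr_sqr ler_sqrt ?dotv_ge0 // dotvE (bigD1 i) //= -expr2 lerDl.
by apply: sumr_ge0 => j _; rewrite -expr2 sqr_ge0.
Qed.

Lemma mxnorm_le v : `|v| <= euclid_norm v.
Proof.
change (mx_norm v <= euclid_norm v); rewrite mx_normrE; apply: bigmax_le; first exact: norm_ge0.
by move=> [i j] _ /=; rewrite (ord1 j); exact: entry_le.
Qed.

End Helpers.


Unset Implicit Arguments. Set Strict Implicit.
Theorem corollary4p2 (R : realType) (n : nat) (x : nat -> 'cV[R]_n) :
  BFGS_sequence (@euclid_norm R n) x -> x @ \oo --> (0 : 'cV[R]_n).
Proof.
case=> g [mu [nu [H0 [hg [mu0 [munu [nu1 [H0pd Hk]]]]]]]].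
pose s := fun k => x k.+1 - x k.
pose y := fun k => g k.+1 - g k.
have Hk' : forall k, (exists t, 0 <= t /\ BFGS_H H0 s y k *m g k = - (t *: s k)) /\
    euclid_norm (x k.+1) <= euclid_norm (x k) + mu * dotv (g k) (s k) /\
    dotv (g k.+1) (s k) >= nu * dotv (g k) (s k) := Hk.
clear Hk.
pose r := fun k => euclid_norm (x k).
have hgk k : 0 < r k /\ g k = (r k)^-1 *: x k := grad_norm (hg k).1 (hg k).2.
have [t ht] := choice (fun k => (Hk' k).1).
pose H := BFGS_H H0 s y.
have HS k : H k.+1 = BFGS_update (H k) (s k) (y k) by [].
pose dl := fun k => - dotv (g k) (s k).
pose B := fix B k := match k with 0 => invmx H0 | k'.+1 => Bupd (B k') (g k') (y k') (s k') (t k') end.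
have BS k : B k.+1 = Bupd (B k) (g k) (y k) (s k) (t k) by [].
have H0u : H0 \in unitmx.
  rewrite unitmxE unitfE; apply/negP => /det0P [v vn0 vH].
  have e : H0 *m v^T = 0 by rewrite -{1}(proj1 H0pd) -trmx_mul vH trmx0.
  have := (proj2 H0pd) v^T; rewrite trmx_eq0 vn0 e dotv0r ltxx => /(_ isT).
  by [].
have facts k : posdef (H k) -> [/\ 0 < t k, 0 < dl k & (1 - nu) * dl k <= dotv (s k) (y k)].
  move=> Hpd; have [t0 Hg] := ht k.
  have [tp dp] := tpos Hpd Hg (hg k).2 t0.
  split => //.
  have w := (Hk' k).2.2.
  rewrite /dl /y dotvBr (dotvC (s k) (g k.+1)) (dotvC (s k) (g k)).
  by move: w; rewrite /dl; lra.
have inv k : [/\ posdef (H k), H k *m B k = 1%:M & (B k)^T = B k].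
  elim: k => [|k [Hpd HB BT]].
    split => //=; first exact: mulmxV.
    by rewrite trmx_inv (proj1 H0pd).
  have [tp dp sy] := facts k Hpd.
  have syp : 0 < dotv (s k) (y k) by apply: lt_le_trans sy; rewrite mulr_gt0 // subr_gt0.
  have [_ Hg] := ht k.
  rewrite HS BS; split.
  - exact: upd_posdef.
  - apply: inv_upd => //; first by case: Hpd.
    + by rewrite gt_eqF.
    + by rewrite -oppr_eq0 lt0r_neq0.
    + by rewrite gt_eqF.
  - by apply: Bupd_tr.
have psd k v : 0 <= dotv v (B k *m v).
  have [Hpd HB _] := inv k.
  set w := B k *m v.
  have -> : v = H k *m w by rewrite /w mulmxA HB mul1mx.
  rewrite dotvC; exact: posdef_ge0.
have diag0 k i : 0 <= B k i i by rewrite -dot_delta2.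
have tr0 k : 0 <= \tr (B k) by rewrite /mxtrace; apply: sumr_ge0 => i _.
have armijo k : r k.+1 <= r k - mu * dl k.
  by move: ((Hk' k).2.1); rewrite /dl /r mulrN opprK.
have rdec k : r k.+1 <= r k.
  have [Hpd _ _] := inv k; have [_ dp _] := facts k Hpd.
  by apply: le_trans (armijo k) _; rewrite gerBl mulr_ge0 // ltW.
have rmono j k : (j <= k)%N -> r k <= r j.
  move=> /subnK <-; elim: (k - j)%N => [|i IH]; first by rewrite add0n.
  by rewrite addSn; apply: le_trans IH; exact: rdec.
have claim e : 0 < e -> exists K, r K < e.
  move=> e0; apply/not_existsP => /= allK.
  have reK K : e <= r K by rewrite leNgt; apply/negP; exact: allK.
  set T0 := \tr (B 0).
  set S := r 0 / mu.
  pose c := fun k => (t k * dl k)^-1.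
  have tp k : 0 < t k by have [Hpd _ _] := inv k; have [] := facts k Hpd.
  have dp k : 0 < dl k by have [Hpd _ _] := inv k; have [] := facts k Hpd.
  have syk k : (1 - nu) * dl k <= dotv (s k) (y k).
    by have [Hpd _ _] := inv k; have [] := facts k Hpd.
  have syp k : 0 < dotv (s k) (y k).
    by apply: lt_le_trans (syk k); rewrite mulr_gt0 // subr_gt0.
  have yy k : (dotv (s k) (y k))^-1 * dotv (y k) (y k) <= e^-1.
    have idk := yid (hgk k).1 (hgk k).2 (hgk k.+1).1 (hgk k.+1).2.
    rewrite -/(r k) -/(r k.+1) -/(y k) -/(s k) in idk.
    set a := dotv (y k) (y k) in idk *; set b := dotv (s k) (y k) in idk *.
    have a0 : 0 <= a by exact: dotv_ge0.
    have bp : 0 < b := syp k.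
    rewrite mulrC (ler_pdivrMr _ _ bp) [e^-1 * _]mulrC (ler_pdivlMr _ _ e0).
    have rr : 2 * e <= r k + r k.+1 by have := reK k; have := reK k.+1; lra.
    have := ler_wpM2l a0 rr; nra.
  have trB k : \tr (B k) <= T0 + k%:R / e - \sum_(j < k) c j.
    elim: k => [|k IH]; first by rewrite big_ord0 mul0r addr0 subr0.
    rewrite BS Bupd_trace big_ord_recr /= (unit_gg (hgk k).1 (hgk k).2) mulr1.
    change ((t k * - dotv (g k) (s k))^-1) with (c k).
    have := yy k.
    have -> : (k.+1)%:R / e = k%:R / e + e^-1 by rewrite -addn1 natrD mulrDl mul1r.
    move: IH; lra.
  have c0 k : 0 < c k by rewrite /c invr_gt0 mulr_gt0.
  have sumc k : \sum_(j < k) c j <= T0 + k%:R / e.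
    have := trB k; have := tr0 k; lra.
  have sumd0 k : mu * \sum_(j < k) dl j <= r 0 - r k.
    elim: k => [|k IH]; first by rewrite big_ord0 mulr0 subrr.
    rewrite big_ord_recr /= mulrDr; have := armijo k; move: IH; lra.
  have sumd k : \sum_(j < k) dl j <= S.
    rewrite /S ler_pdivlMr // mulrC; apply: le_trans (sumd0 k) _.
    by rewrite gerBl; apply: norm_ge0.
  set d := `|\det (B 0)|.
  have detlo k : d * (1 - nu) ^+ k * \prod_(j < k) t j <= `|\det (B k)|.
    elim: k => [|k IH]; first by rewrite expr0 big_ord0 !mulr1.
    have [Hpd HB BT] := inv k; have [_ Hg] := ht k.
    rewrite BS (Bupd_det (proj1 Hpd) HB Hg); last first.
    - by rewrite gt_eqF.
    - by rewrite -oppr_eq0 lt0r_neq0 // (dp k).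
    - by rewrite gt_eqF.
    rewrite normrM big_ord_recr /= exprSr.
    have -> : d * ((1 - nu) ^+ k * (1 - nu)) * (\prod_(i < k) t i * t k)
      = (d * (1 - nu) ^+ k * \prod_(i < k) t i) * ((1 - nu) * t k) by ring.
    apply: ler_pM => //.
      by rewrite mulr_ge0 ?prodr_ge0 // ?mulr_ge0 ?exprn_ge0 ?normr_ge0 // ?subr_ge0 ?ltW // => i _; apply: ltW.
      by rewrite mulr_ge0 // ?subr_ge0 ?ltW.
    have dk := dp k; rewrite /dl in dk.
    have tk := tp k; have sk := syp k; have sy := syk k; rewrite /dl in sy.
    rewrite ger0_norm; last by rewrite divr_ge0 // ?mulr_ge0 // ltW.
    rewrite ler_pdivlMr //; nra.
  have detup k : `|\det (B k)| <= (n`!)%:R * (T0 + k%:R / e) ^+ n.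
    have [_ _ BT] := inv k.
    apply: le_trans (det_le_tr BT (psd k)) _.
    rewrite ler_pM2l ?ltr0n ?fact_gt0 //; apply: powle => //.
    have := trB k; have : 0 <= \sum_(j < k) c j by apply: sumr_ge0 => j _; apply: ltW.
    lra.
  have dpos : 0 < d.
    rewrite normr_gt0; have [_ HB _] := inv 0.
    have := congr1 determinant HB; rewrite det_mulmx det1 => e1.
    by apply/eqP => e2; move: e1; rewrite e2 mulr0 => /eqP; rewrite eq_sym oner_eq0.
  have Sp : 0 < S by rewrite /S divr_gt0 // (hgk 0).1.
  apply: (@numeric_contra R n d T0 e S nu t c dl) => //.
  - exact: tr0.
  - by move=> k; apply: le_trans (detlo k) (detup k).
apply/cvgr0Pnorm_lt => e e0.
have [K hK] := claim e e0.
near=> k.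
apply: le_lt_trans (mxnorm_le _) _.
apply: le_lt_trans hK; apply: rmono.
near: k; by exists K.
Unshelve. all: by end_near.
Qed.
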